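(* Let $S$ be a nonempty set, $G$ a group of permutations of $S$, and $s\in S$. Then $SV_G$ is generated by $SV\cup\iota_1^s(G)$.
   Context: Let $\mathfrak C=\{0,1\}^{\omega}$ be the Cantor set, $S$ a nonempty set, and $G$ a subgroup of the symmetric group of $S$. Let $\mathfrak C^S$ be the space of all functions $S\to\mathfrak C$ with the product topology. For a function $\psi\colon S\to\{0,1\}^*$ with $\psi(s)=\varnothing$ for all but finitely many $s$, the dyadic brick $B(\psi)$ is the set of $\kappa\in\mathfrak C^S$ such that $\psi(s)$ is a prefix of $\kappa(s)$ for all $s\in S$; the canonical homeomorphism $\Phi_\psi\colon\mathfrak C^S\to B(\psi)$ is $\Phi_\psi(\kappa)(s)=\psi(s)\cdot\kappa(s)$. For $\gamma\in G$ let $\tau_\gamma(\kappa)(s)=\kappa(\gamma^{-1}s)$. The twist homeomorphism $B(\varphi)\to B(\psi)$ associated to $\gamma$ is $\Phi_\psi\circ\tau_\gamma\circ\Phi_\varphi^{-1}$. The twisted Brin–Thompson group $SV_G$ is the group of all homeomorphisms $h$ of $\mathfrak C^S$ for which there exist two partitions $B(\varphi_1),\dots,B(\varphi_n)$ and $B(\psi_1),\dots,B(\psi_n)$ of $\mathfrak C^S$ into dyadic bricks and $\gamma_1,\dots,\gamma_n\in G$ such that $h|_{B(\varphi_i)}$ is the twist homeomorphism $B(\varphi_i)\to B(\psi_i)$ associated to $\gamma_i$. $SV$ denotes the subgroup obtained when all $\gamma_i$ are required to be trivial (the Brin–Thompson group). For $s\in S$ let $\psi_s\colon S\to\{0,1\}^*$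 be given by $\psi_s(s)=1$ and $\psi_s(t)=\varnothing$ for $t\neq s$, and define $\iota_1^s\colon G\to SV_G$ by letting $\iota_1^s(\gamma)$ be the identity on $\{\kappa:\kappa(s)\text{ begins with }0\}$ and equal to $\Phi_{\psi_s}\circ\tau_\gamma\circ\Phi_{\psi_s}^{-1}$ on $B(\psi_s)$. *)

(* Defs.v *)
From Stdlib Require Import Arith List Classical ClassicalEpsilon FunctionalExtensionality.
Import ListNotations.
Set Implicit Arguments.

Definition Cantor := nat -> bool.
Definition word := list bool.
Definition Config (S : Type) := S -> Cantor.

Definition is_prefix (w : word) (x : Cantor) : Prop :=
  forall i, i < length w -> nth i w false = x i.

Definition wcat (w : word) (x : Cantor) : Cantor :=
  fun i => if i <? length w then nth i w false else x (i - length w).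

Definition wdrop (n : nat) (x : Cantor) : Cantor := fun i => x (i + n).

Definition fin_supp (S : Type) (psi : S -> word) : Prop :=
  exists l : list S, forall t, ~ In t l -> psi t = [].

Definition in_brick (S : Type) (psi : S -> word) (k : Config S) : Prop :=
  forall t, is_prefix (psi t) (k t).

Definition Phi (S : Type) (psi : S -> word) (k : Config S) : Config S :=
  fun t => wcat (psi t) (k t).
Definition Phi_inv (S : Type) (psi : S -> word) (k : Config S) : Config S :=
  fun t => wdrop (length (psi t)) (k t).

Record perm (S : Type) := Perm {
  pfun : S -> S;
  pinv : S -> S;
  pfunK : forall x, pinv (pfun x) = x;
  pinvK : forall x, pfun (pinv x) = x }.

Definition perm_id (S : Type) : perm S :=
  @Perm S (fun x => x) (fun x => x) (fun x => eq_refl) (fun x => eq_refl).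

Definition is_subgroup (S : Type) (G : perm S -> Prop) : Prop :=
  (exists e, G e /\ forall x, pfun e x = x) /\
  (forall g h, G g -> G h -> exists gh, G gh /\ forall x, pfun gh x = pfun g (pfun h x)) /\
  (forall g, G g -> exists gi, G gi /\ forall x, pfun gi x = pinv g x) /\
  (forall g h, (forall x, pfun g x = pfun h x) -> G g -> G h).

Definition tau (S : Type) (g : perm S) (k : Config S) : Config S :=
  fun t => k (pinv g t).

Definition twist (S : Type) (phi psi : S -> word) (g : perm S) (k : Config S) : Config S :=
  Phi psi (tau g (Phi_inv phi k)).

(** Product topology on C^S: dyadic bricks form a base, so continuity is
    expressed with bricks as basic neighbourhoods. *)
Definition continuous_cfg (S : Type) (h : Config S -> Config S) : Prop :=
  forall k psi, fin_supp psi -> in_brick psi (h k) ->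
    exists phi, fin_supp phi /\ in_brick phi k /\
      forall k', in_brick phi k' -> in_brick psi (h k').

Definition is_homeo (S : Type) (h : Config S -> Config S) : Prop :=
  exists h', (forall k, h' (h k) = k) /\ (forall k, h (h' k) = k) /\
    continuous_cfg h /\ continuous_cfg h'.

Definition brick_partition (S : Type) (l : list (S -> word)) : Prop :=
  Forall (@fin_supp S) l /\
  (forall k, exists i, i < length l /\ in_brick (nth i l (fun _ => [])) k) /\
  (forall k i j, i < length l -> j < length l ->
     in_brick (nth i l (fun _ => [])) k -> in_brick (nth j l (fun _ => [])) k -> i = j).

Record piece (S : Type) := Piece { pdom : S -> word; pcod : S -> word; pgam : perm S }.

Definition twisted_by (S : Type) (P : perm S -> Prop) (h : Config S -> Config S) : Prop :=
  is_homeo h /\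
  exists l : list (piece S),
    brick_partition (map (@pdom S) l) /\
    brick_partition (map (@pcod S) l) /\
    Forall (fun p => P (pgam p)) l /\
    Forall (fun p => forall k, in_brick (pdom p) k -> h k = twist (pdom p) (pcod p) (pgam p) k) l.

Definition SVG (S : Type) (G : perm S -> Prop) := twisted_by G.
Definition SV (S : Type) := twisted_by (fun g : perm S => forall x, pfun g x = x).

Definition psi_s (S : Type) (s : S) : S -> word :=
  fun t => if excluded_middle_informative (t = s) then [true] else [].

Definition iota1 (S : Type) (s : S) (g : perm S) (k : Config S) : Config S :=
  if k s 0 then twist (psi_s s) (psi_s s) g k else k.

Inductive generated (S : Type) (A : (Config S -> Config S) -> Prop) :
  (Config S -> Config S) -> Prop :=
| gen_base f : A f -> generated A f
| gen_id : generated A (fun k => k)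
| gen_comp f g : generated A f -> generated A g -> generated A (fun k => f (g k))
| gen_inv f g : generated A f -> (forall k, g (f k) = k) -> (forall k, f (g k) = k) ->
    generated A g.

(* Main.v *)
Require Import Defs.
From Stdlib Require Import Arith List Lia Bool Classical ClassicalEpsilon FunctionalExtensionality.
Import ListNotations.
Set Implicit Arguments.

Lemma twist_app {S : Type} (phi psi : S -> word) (g : perm S) k t i :
  twist phi psi g k t i =
  if i <? length (psi t) then nth i (psi t) false
  else k (pinv g t) (i - length (psi t) + length (phi (pinv g t))).
Proof. reflexivity. Qed.

Lemma in_brick_iff {S : Type} (phi : S -> word) k :
  in_brick phi k <-> forall t i, i < length (phi t) -> k t i = nth i (phi t) false.
Proof.
  unfold in_brick, is_prefix; split; intros H t i Hi; symmetry; apply H; auto.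
Qed.

Lemma twist_in {S : Type} (phi psi : S -> word) g k : in_brick psi (twist phi psi g k).
Proof.
  apply in_brick_iff; intros t i Hi; rewrite twist_app.
  destruct (Nat.ltb_spec i (length (psi t))); [reflexivity|lia].
Qed.

Lemma cfg_ext {S : Type} (k k' : Config S) : (forall t i, k t i = k' t i) -> k = k'.
Proof. intros H; apply functional_extensionality; intro t; apply functional_extensionality; intro i; apply H. Qed.

Lemma twist_comp {S : Type} (d b e : S -> word) (g1 g2 g3 : perm S) k :
  (forall x, pinv g3 x = pinv g1 (pinv g2 x)) ->
  twist b e g2 (twist d b g1 k) = twist d e g3 k.
Proof.
  intros H; apply cfg_ext; intros t i.
  rewrite !twist_app, H.
  destruct (Nat.ltb_spec i (length (e t))); [reflexivity|].
  destruct (Nat.ltb_spec (i - length (e t) + length (b (pinv g2 t))) (length (b (pinv g2 t)))); [lia|].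
  f_equal; lia.
Qed.

Lemma twist_self {S : Type} (phi : S -> word) (g : perm S) k :
  in_brick phi k -> (forall x, pinv g x = x) -> twist phi phi g k = k.
Proof.
  intros Hk Hg; apply cfg_ext; intros t i; rewrite twist_app, Hg.
  rewrite in_brick_iff in Hk.
  destruct (Nat.ltb_spec i (length (phi t))).
  - symmetry; apply Hk; auto.
  - f_equal; lia.
Qed.

Definition perm_comp {S : Type} (g h : perm S) : perm S.
Proof.
  refine (@Perm S (fun x => pfun g (pfun h x)) (fun x => pinv h (pinv g x)) _ _).
  - intros x; rewrite pfunK, pfunK; reflexivity.
  - intros x; rewrite pinvK, pinvK; reflexivity.
Defined.

Definition perm_inv {S : Type} (g : perm S) : perm S :=
  @Perm S (pinv g) (pfun g) (pinvK g) (pfunK g).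

Lemma twist_inv {S : Type} (phi psi : S -> word) (g : perm S) k :
  in_brick psi k -> twist phi psi g (twist psi phi (perm_inv g) k) = k.
Proof.
  intros Hk. rewrite (@twist_comp S psi phi psi (perm_inv g) g (perm_id S)).
  - apply twist_self; auto.
  - intros x; simpl; rewrite pinvK; reflexivity.
Qed.

Lemma twist_inv' {S : Type} (phi psi : S -> word) (g : perm S) k :
  in_brick phi k -> twist psi phi (perm_inv g) (twist phi psi g k) = k.
Proof.
  intros Hk. rewrite (@twist_comp S phi psi phi g (perm_inv g) (perm_id S)).
  - apply twist_self; auto.
  - intros x; simpl; rewrite pfunK; reflexivity.
Qed.

Definition word_of (y : Cantor) (n : nat) : word := map y (seq 0 n).

Lemma word_of_len y n : length (word_of y n) = n.
Proof. unfold word_of; rewrite length_map, length_seq; auto. Qed.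

Lemma word_of_nth y n i : i < n -> nth i (word_of y n) false = y i.
Proof.
  intros H; unfold word_of.
  rewrite (nth_indep _ false (y 0)) by (rewrite length_map, length_seq; auto).
  rewrite map_nth, seq_nth; auto.
Qed.

Lemma in_brick_wo {S : Type} (x : Config S) (n : S -> nat) k :
  in_brick (fun u => word_of (x u) (n u)) k <-> forall u i, i < n u -> k u i = x u i.
Proof.
  rewrite in_brick_iff; split; intros H u i Hi.
  - rewrite H by (rewrite word_of_len; auto). apply word_of_nth; auto.
  - rewrite word_of_len in Hi. rewrite H by auto. symmetry; apply word_of_nth; auto.
Qed.

Lemma wo_sub {S : Type} (phi : S -> word) (x : Config S) (n : S -> nat) k :
  in_brick phi x -> (forall u, length (phi u) <= n u) ->
  in_brick (fun u => word_of (x u) (n u)) k -> in_brick phi k.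
Proof.
  rewrite in_brick_wo, !in_brick_iff; intros Hx Hn Hk t i Hi.
  rewrite Hk by (specialize (Hn t); lia). apply Hx; auto.
Qed.

Lemma wo_inter {S : Type} (a b : S -> word) (y z : Config S) :
  in_brick a y -> in_brick b y -> in_brick a z -> in_brick b z ->
  in_brick (fun u => word_of (y u) (Nat.max (length (a u)) (length (b u)))) z.
Proof.
  rewrite in_brick_wo, !in_brick_iff; intros Hya Hyb Hza Hzb u i Hi.
  destruct (Nat.ltb_spec i (length (a u))).
  - rewrite Hza, Hya; auto.
  - rewrite Hzb, Hyb; auto; lia.
Qed.


Lemma restr {S : Type} (phi psi : S -> word) (g : perm S) (x : Config S) (nd m : S -> nat) :
  in_brick phi x ->
  (forall u, length (phi u) <= nd u) -> (forall t, length (psi t) <= m t) ->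
  (forall u, nd u - length (phi u) = m (pfun g u) - length (psi (pfun g u))) ->
  forall k, in_brick phi k ->
  (in_brick (fun u => word_of (x u) (nd u)) k <->
   in_brick (fun t => word_of (twist phi psi g x t) (m t)) (twist phi psi g k)) /\
  (in_brick (fun u => word_of (x u) (nd u)) k ->
   twist phi psi g k = twist (fun u => word_of (x u) (nd u)) (fun t => word_of (twist phi psi g x t) (m t)) g k).
Proof.
  intros Hx Hnd Hm Heq k Hk.
  assert (Heq' : forall t, nd (pinv g t) - length (phi (pinv g t)) = m t - length (psi t)).
  { intro t. rewrite Heq, pinvK. reflexivity. }
  assert (Hiff : in_brick (fun u => word_of (x u) (nd u)) k <->
   in_brick (fun t => word_of (twist phi psi g x t) (m t)) (twist phi psi g k)).
  { rewrite !in_brick_wo. rewrite in_brick_iff in Hx, Hk. split.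
    - intros H t i Hi. rewrite !twist_app.
      destruct (Nat.ltb_spec i (length (psi t))); [reflexivity|].
      apply H. specialize (Heq' t); specialize (Hnd (pinv g t)); lia.
    - intros H u j Hj.
      destruct (Nat.ltb_spec j (length (phi u))).
      + rewrite Hk, Hx; auto.
      + specialize (H (pfun g u) (j - length (phi u) + length (psi (pfun g u)))).
        rewrite !twist_app, pfunK in H.
        destruct (Nat.ltb_spec (j - length (phi u) + length (psi (pfun g u))) (length (psi (pfun g u)))); [lia|].
        replace (j - length (phi u) + length (psi (pfun g u)) - length (psi (pfun g u)) + length (phi u)) with j in H by lia.
        apply H. specialize (Heq u); specialize (Hm (pfun g u)); lia. }
  split; [exact Hiff|].
  intros Hd. pose proof (proj1 Hiff Hd) as Hb.
  apply cfg_ext; intros t i.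
  rewrite (twist_app (fun u => word_of (x u) (nd u))). rewrite word_of_len.
  destruct (Nat.ltb_spec i (m t)).
  - rewrite in_brick_wo in Hb. rewrite Hb by auto. symmetry; apply word_of_nth; auto.
  - rewrite word_of_len, twist_app.
    destruct (Nat.ltb_spec i (length (psi t))); [specialize (Hm t); lia|].
    f_equal. specialize (Heq' t); specialize (Hnd (pinv g t)); specialize (Hm t); lia.
Qed.


Definition ind (P : Prop) : nat := if excluded_middle_informative P then 1 else 0.

Fixpoint cntP {A : Type} (P : A -> Prop) (l : list A) : nat :=
  match l with [] => 0 | a :: l' => ind (P a) + cntP P l' end.

Lemma ind_T (P : Prop) : P -> ind P = 1.
Proof. unfold ind; destruct (excluded_middle_informative P); tauto. Qed.
Lemma ind_F (P : Prop) : ~ P -> ind P = 0.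
Proof. unfold ind; destruct (excluded_middle_informative P); tauto. Qed.
Lemma ind_iff (P Q : Prop) : (P <-> Q) -> ind P = ind Q.
Proof. intros H; unfold ind; destruct (excluded_middle_informative P), (excluded_middle_informative Q); tauto. Qed.
Lemma ind_le (P : Prop) : ind P <= 1.
Proof. unfold ind; destruct (excluded_middle_informative P); lia. Qed.

Lemma cnt_ext {A : Type} (P Q : A -> Prop) l :
  (forall a, In a l -> (P a <-> Q a)) -> cntP P l = cntP Q l.
Proof.
  induction l as [|a l IH]; simpl; intros H; auto.
  rewrite IH by auto. f_equal.
  unfold ind. destruct (excluded_middle_informative (P a)), (excluded_middle_informative (Q a));
   auto; exfalso; firstorder.
Qed.

Lemma cnt_map {A B : Type} (P : B -> Prop) (f : A -> B) l :
  cntP P (map f l) = cntP (fun a => P (f a)) l.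
Proof. induction l; simpl; auto. Qed.

Lemma cnt_app {A : Type} (P : A -> Prop) l1 l2 : cntP P (l1 ++ l2) = cntP P l1 + cntP P l2.
Proof. induction l1; simpl; auto. rewrite IHl1; lia. Qed.

Lemma cnt_zero {A : Type} (P : A -> Prop) l : (forall a, In a l -> ~ P a) -> cntP P l = 0.
Proof.
  induction l; simpl; intros H; auto. rewrite ind_F by auto. rewrite IHl; auto.
Qed.

Lemma cnt_In {A : Type} (P : A -> Prop) l a : In a l -> P a -> 1 <= cntP P l.
Proof.
  induction l; simpl; [tauto|]; intros [->|H] Ha; [rewrite ind_T by auto; lia|].
  specialize (IHl H Ha); lia.
Qed.

Lemma cnt_ex {A : Type} (P : A -> Prop) l : 1 <= cntP P l -> exists a, In a l /\ P a.
Proof.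
  induction l as [|b l IH]; simpl; intros H; [lia|].
  unfold ind in H. destruct (excluded_middle_informative (P b)).
  - exists b; auto.
  - destruct IH as [a [Ha Hb]]; [lia|]. exists a; auto.
Qed.

Lemma cnt_uniq {A : Type} (P : A -> Prop) l a b :
  cntP P l <= 1 -> In a l -> In b l -> P a -> P b -> a = b.
Proof.
  induction l as [|c l IH]; simpl; intros H Ha Hb Pa Pb; [contradiction|].
  destruct Ha as [Ha|Ha]; destruct Hb as [Hb|Hb]; try congruence.
  - subst. rewrite ind_T in H by auto. pose proof (cnt_In P l b Hb Pb); lia.
  - subst. rewrite ind_T in H by auto. pose proof (cnt_In P l a Ha Pa); lia.
  - apply IH; auto. pose proof (ind_le (P c)); lia.
Qed.

Lemma cnt_flat {A B : Type} (P : B -> Prop) (Q : A -> Prop) (f : A -> list B) l :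
  (forall a, In a l -> cntP P (f a) = ind (Q a)) -> cntP P (flat_map f l) = cntP Q l.
Proof.
  induction l; simpl; intros H; auto. rewrite cnt_app, H, IHl; auto.
Qed.

Lemma cnt_ex_idx {A : Type} (P : A -> Prop) l d :
  1 <= cntP P l -> exists i, i < length l /\ P (nth i l d).
Proof.
  induction l as [|b l IH]; simpl; intros H; [lia|].
  unfold ind in H. destruct (excluded_middle_informative (P b)).
  - exists 0; split; auto; lia.
  - destruct IH as [i [Hi Hp]]; [lia|]. exists (S i); simpl; split; auto; lia.
Qed.

Lemma cnt_two_idx {A : Type} (P : A -> Prop) l d :
  2 <= cntP P l -> exists i j, i < j /\ j < length l /\ P (nth i l d) /\ P (nth j l d).
Proof.
  induction l as [|b l IH]; simpl; intros H; [lia|].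
  unfold ind in H. destruct (excluded_middle_informative (P b)).
  - destruct (cnt_ex_idx P l d) as [j [Hj Hp]]; [lia|].
    exists 0, (S j); simpl; repeat split; auto; lia.
  - destruct IH as [i [j [Hij [Hj [Hi Hp]]]]]; [lia|].
    exists (S i), (S j); simpl; repeat split; auto; lia.
Qed.

Lemma idx_two_cnt {A : Type} (P : A -> Prop) l d i j :
  i < j -> j < length l -> P (nth i l d) -> P (nth j l d) -> 2 <= cntP P l.
Proof.
  revert i j; induction l as [|b l IH]; simpl; intros i j Hij Hj Pi Pj; [lia|].
  destruct i as [|i]; destruct j as [|j]; try lia.
  - rewrite ind_T by auto. assert (1 <= cntP P l); [|lia].
    apply cnt_In with (nth j l d); auto. apply nth_In; lia.
  - pose proof (IH i j ltac:(lia) ltac:(lia) Pi Pj). lia.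
Qed.

Definition part {S : Type} (l : list (S -> word)) : Prop :=
  Forall (@fin_supp S) l /\ forall k, cntP (fun phi => in_brick phi k) l = 1.

Lemma part_iff {S : Type} (l : list (S -> word)) : brick_partition l <-> part l.
Proof.
  unfold brick_partition, part; split.
  - intros [Hf [Hc Hd]]; split; auto; intros k.
    destruct (Hc k) as [i [Hi Hk]].
    assert (1 <= cntP (fun phi => in_brick phi k) l) by (apply cnt_In with (nth i l (fun _ => [])); auto; apply nth_In; auto).
    destruct (Nat.le_gt_cases (cntP (fun phi => in_brick phi k) l) 1); [lia|].
    destruct (cnt_two_idx (fun phi => in_brick phi k) l (fun _ => []) ltac:(lia)) as [i' [j' [H1 [H2 [H3 H4]]]]].
    assert (i' = j') by (apply (Hd k); auto; lia). lia.
  - intros [Hf Hc]; split; auto; split.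
    + intros k. apply (cnt_ex_idx (fun phi => in_brick phi k)). rewrite Hc; auto.
    + intros k i j Hi Hj Pi Pj.
      destruct (Nat.lt_total i j) as [H|[H|H]]; auto.
      * pose proof (idx_two_cnt (fun phi => in_brick phi k) l _ H Hj Pi Pj). specialize (Hc k); lia.
      * pose proof (idx_two_cnt (fun phi => in_brick phi k) l _ H Hi Pj Pi). specialize (Hc k); lia.
Qed.


Definition pw {S : Type} (l : list (piece S)) (k : Config S) : Config S :=
  match excluded_middle_informative (exists p, In p l /\ in_brick (pdom p) k) with
  | left H => let p := proj1_sig (constructive_indefinite_description _ H) in
              twist (pdom p) (pcod p) (pgam p) k
  | right _ => k
  end.

Lemma pw_agree {S : Type} (l : list (piece S)) p k :
  cntP (fun q => in_brick (pdom q) k) l <= 1 -> In p l -> in_brick (pdom p) k ->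
  pw l k = twist (pdom p) (pcod p) (pgam p) k.
Proof.
  intros Hc Hp Hk. unfold pw.
  destruct (excluded_middle_informative _) as [H|H]; [|exfalso; eauto].
  destruct (constructive_indefinite_description _ H) as [q [Hq Hqk]]; simpl.
  assert (q = p) by (apply (cnt_uniq _ _ _ _ Hc); auto). subst; auto.
Qed.

Definition agree {S : Type} (l : list (piece S)) (h : Config S -> Config S) : Prop :=
  forall p, In p l -> forall k, in_brick (pdom p) k -> h k = twist (pdom p) (pcod p) (pgam p) k.

Lemma fin_supp_wo {S : Type} (x : Config S) (n : S -> nat) (L : list S) :
  (forall u, ~ In u L -> n u = 0) -> fin_supp (fun u => word_of (x u) (n u)).
Proof. intros H; exists L; intros t Ht; rewrite H; auto. Qed.

Lemma cont_pw {S : Type} (l : list (piece S)) h :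
  (forall k, exists p, In p l /\ in_brick (pdom p) k) ->
  (forall p, In p l -> fin_supp (pdom p)) -> agree l h -> continuous_cfg h.
Proof.
  intros Hcov Hfin Hag k psi2 Hf2 Hb.
  destruct (Hcov k) as [p [Hp Hk]].
  set (phi := pdom p) in *. set (psi := pcod p) in *. set (g := pgam p) in *.
  set (m := fun t => Nat.max (length (psi t)) (length (psi2 t))).
  set (nd := fun u => length (phi u) + m (pfun g u) - length (psi (pfun g u))).
  exists (fun u => word_of (k u) (nd u)).
  destruct (Hfin p Hp) as [L1 HL1]. destruct Hf2 as [L2 HL2].
  split; [|split].
  - apply fin_supp_wo with (L1 ++ map (pinv g) L2).
    intros u Hu. rewrite in_app_iff in Hu.
    assert (phi u = []) by (apply HL1; tauto).
    assert (psi2 (pfun g u) = []).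
    { apply HL2. intros Hin. apply Hu; right. rewrite <- (pfunK g u). apply in_map; auto. }
    unfold nd, m. rewrite H, H0. simpl. lia.
  - apply in_brick_wo; auto.
  - intros k' Hk'.
    assert (Hk'phi : in_brick phi k').
    { apply wo_sub with k nd; auto. intros u; unfold nd, m; lia. }
    rewrite (Hag p Hp k' Hk'phi).
    destruct (@restr S phi psi g k nd m Hk) with (k := k') as [Hiff _]; auto.
    + intros u; unfold nd, m; lia.
    + intros t; unfold m; lia.
    + intros u; unfold nd, m; lia.
    + apply wo_sub with (twist phi psi g k) m.
      * assert (E : h k = twist phi psi g k) by (apply Hag; auto). rewrite <- E. auto.
      * intros t; unfold m; lia.
      * apply Hiff; auto.
Qed.

Definition inv_piece {S : Type} (p : piece S) : piece S :=
  Piece (pcod p) (pdom p) (perm_inv (pgam p)).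

Lemma part_cov {S : Type} {l : list (piece S)} {f : piece S -> S -> word} :
  part (map f l) -> forall k, exists p, In p l /\ in_brick (f p) k.
Proof.
  intros [_ Hc] k. specialize (Hc k). rewrite cnt_map in Hc.
  apply cnt_ex; lia.
Qed.

Lemma part_le1 {S : Type} {l : list (piece S)} {f : piece S -> S -> word} :
  part (map f l) -> forall k, cntP (fun p => in_brick (f p) k) l <= 1.
Proof.
  intros [_ Hc] k. specialize (Hc k). rewrite cnt_map in Hc. lia.
Qed.

Lemma part_fin {S : Type} {l : list (piece S)} {f : piece S -> S -> word} :
  part (map f l) -> forall p, In p l -> fin_supp (f p).
Proof.
  intros [Hf _] p Hp. rewrite Forall_forall in Hf. apply Hf, in_map; auto.
Qed.

Lemma pw_inv_agree {S : Type} (l : list (piece S)) :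
  part (map (@pcod S) l) -> agree (map inv_piece l) (pw (map inv_piece l)).
Proof.
  intros Hc p Hp k Hk. apply pw_agree; auto.
  rewrite cnt_map. exact (part_le1 Hc k).
Qed.

Lemma pw_homeo {S : Type} (l : list (piece S)) h :
  part (map (@pdom S) l) -> part (map (@pcod S) l) -> agree l h -> is_homeo h.
Proof.
  intros Hd Hc Hag.
  assert (Hag' : forall p, In p l -> forall k, in_brick (pcod p) k ->
            pw (map inv_piece l) k = twist (pcod p) (pdom p) (perm_inv (pgam p)) k).
  { intros p Hp k Hk. apply (@pw_inv_agree S l Hc (inv_piece p)); auto. apply in_map; auto. }
  exists (pw (map inv_piece l)). split; [|split; [|split]].
  - intros k. destruct (part_cov Hd k) as [p [Hp Hk]].
    rewrite (Hag p Hp k Hk). rewrite (Hag' p Hp) by apply twist_in.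
    apply twist_inv'; auto.
  - intros k. destruct (part_cov Hc k) as [p [Hp Hk]].
    rewrite (Hag' p Hp k Hk). rewrite (Hag p Hp) by apply twist_in.
    apply twist_inv; auto.
  - apply cont_pw with l; auto. apply part_cov; auto. apply part_fin; auto.
  - apply cont_pw with (map inv_piece l).
    + intros k. destruct (part_cov Hc k) as [p [Hp Hk]]. exists (inv_piece p); split; auto.
      apply in_map; auto.
    + intros q Hq. apply in_map_iff in Hq. destruct Hq as [p [<- Hp]]. apply (part_fin Hc); auto.
    + apply pw_inv_agree; auto.
Qed.

Lemma cod_part {S : Type} (l : list (piece S)) h h' :
  (forall k, h' (h k) = k) -> (forall k, h (h' k) = k) ->
  part (map (@pdom S) l) -> Forall (@fin_supp S) (map (@pcod S) l) -> agree l h ->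
  part (map (@pcod S) l).
Proof.
  intros H1 H2 [Hf Hc] Hfc Hag. split; auto. intros k.
  rewrite cnt_map. specialize (Hc (h' k)). rewrite cnt_map in Hc. rewrite <- Hc.
  apply cnt_ext. intros p Hp. split; intros Hk.
  - set (x := twist (pcod p) (pdom p) (perm_inv (pgam p)) k).
    assert (h x = k) by (unfold x; rewrite (Hag p Hp) by apply twist_in; apply twist_inv; auto).
    rewrite <- H, H1. apply twist_in.
  - rewrite <- (H2 k). rewrite (Hag p Hp _ Hk). apply twist_in.
Qed.


Definition cm {S : Type} (p q : piece S) (t : S) : nat :=
  Nat.max (length (pcod p t)) (length (pdom q t)).
Definition cnd {S : Type} (p q : piece S) (u : S) : nat :=
  length (pdom p u) + cm p q (pfun (pgam p) u) - length (pcod p (pfun (pgam p) u)).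
Definition cm' {S : Type} (p q : piece S) (t : S) : nat :=
  length (pcod q t) + cm p q (pinv (pgam q) t) - length (pdom q (pinv (pgam q) t)).
Definition tw {S : Type} (p : piece S) := twist (pdom p) (pcod p) (pgam p).

Definition mkcomp {S : Type} (p q : piece S) (x : Config S) : piece S :=
  Piece (fun u => word_of (x u) (cnd p q u))
        (fun t => word_of (tw q (tw p x) t) (cm' p q t))
        (perm_comp (pgam q) (pgam p)).

Lemma mkcomp_spec {S : Type} (p q : piece S) x :
  in_brick (pdom p) x -> in_brick (pdom q) (tw p x) ->
  forall k, (in_brick (pdom (mkcomp p q x)) k <-> in_brick (pdom p) k /\ in_brick (pdom q) (tw p k)) /\
   (in_brick (pdom (mkcomp p q x)) k -> tw q (tw p k) = tw (mkcomp p q x) k).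
Proof.
  intros Hx Hqx k.
  assert (Hsub : in_brick (pdom (mkcomp p q x)) k -> in_brick (pdom p) k).
  { intros H. apply wo_sub with x (cnd p q); auto. intros u; unfold cnd, cm; lia. }
  assert (Hr : forall k, in_brick (pdom p) k ->
    (in_brick (pdom (mkcomp p q x)) k <-> in_brick (fun t => word_of (tw p x t) (cm p q t)) (tw p k)) /\
    (in_brick (pdom (mkcomp p q x)) k -> tw p k = twist (pdom (mkcomp p q x)) (fun t => word_of (tw p x t) (cm p q t)) (pgam p) k)).
  { intros k' Hk'. apply restr; auto; intros; unfold cnd, cm; lia. }
  assert (Hint : forall z, in_brick (fun t => word_of (tw p x t) (cm p q t)) z <->
                           in_brick (pcod p) z /\ in_brick (pdom q) z).
  { intros z; split.
    - intros H; split; [apply wo_sub with (tw p x) (cm p q); auto; [apply twist_in|intros; unfold cm; lia]|].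
      apply wo_sub with (tw p x) (cm p q); auto. intros; unfold cm; lia.
    - intros [H1 H2]. apply wo_inter; auto. apply twist_in. }
  split.
  - split.
    + intros H. pose proof (Hsub H) as Hk. split; auto.
      apply (Hint (tw p k)), (proj1 (proj1 (Hr k Hk)) H).
    + intros [Hk Hq]. apply (proj2 (proj1 (Hr k Hk))). apply Hint; split; auto. apply twist_in.
  - intros H. pose proof (Hsub H) as Hk. destruct (Hr k Hk) as [Hiff Heq].
    pose proof (proj1 Hiff H) as Hb.
    assert (Hr2 := @restr S (pdom q) (pcod q) (pgam q) (tw p x) (cm p q) (cm' p q) Hqx).
    destruct (Hr2 ltac:(intros; unfold cm; lia) ltac:(intros; unfold cm', cm; lia)
                 ltac:(intros u; unfold cm'; rewrite pfunK; unfold cm; lia) (tw p k))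
      as [_ Heq2].
    { apply Hint in Hb; tauto. }
    unfold tw at 1. rewrite (Heq2 Hb). unfold tw at 2. rewrite Heq.
    unfold tw; simpl. apply twist_comp. intros; reflexivity.
    exact H.
Qed.

Definition comp_piece {S : Type} (p q : piece S) : list (piece S) :=
  match excluded_middle_informative (exists x, in_brick (pdom p) x /\ in_brick (pdom q) (tw p x)) with
  | left H => [mkcomp p q (proj1_sig (constructive_indefinite_description _ H))]
  | right _ => []
  end.

Lemma mkcomp_fin {S : Type} (p q : piece S) x :
  fin_supp (pdom p) -> fin_supp (pcod p) -> fin_supp (pdom q) -> fin_supp (pcod q) ->
  fin_supp (pdom (mkcomp p q x)) /\ fin_supp (pcod (mkcomp p q x)).
Proof.
  intros [L1 H1] [L2 H2] [L3 H3] [L4 H4]. split.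
  - apply fin_supp_wo with (L1 ++ map (pinv (pgam p)) L3). intros u Hu.
    rewrite in_app_iff in Hu. unfold cnd, cm.
    rewrite H1 by tauto. rewrite (H3 (pfun (pgam p) u)). simpl; lia.
    intros Hin; apply Hu; right; rewrite <- (pfunK (pgam p) u); apply in_map; auto.
  - apply fin_supp_wo with (L4 ++ map (pfun (pgam q)) L2). intros t Ht.
    rewrite in_app_iff in Ht. unfold cm', cm.
    rewrite H4 by tauto. rewrite (H2 (pinv (pgam q) t)). simpl; lia.
    intros Hin; apply Ht; right; rewrite <- (pinvK (pgam q) t); apply in_map; auto.
Qed.

Lemma homeo_comp {S : Type} (h1 h2 : Config S -> Config S) :
  is_homeo h1 -> is_homeo h2 -> is_homeo (fun k => h2 (h1 k)).
Proof.
  intros [h1' [A1 [B1 [C1 D1]]]] [h2' [A2 [B2 [C2 D2]]]].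
  exists (fun k => h1' (h2' k)). split; [|split; [|split]].
  - intros k; rewrite A2, A1; auto.
  - intros k; rewrite B1, B2; auto.
  - intros k psi Hf Hb. destruct (C2 (h1 k) psi Hf Hb) as [phi1 [Hf1 [Hb1 H1]]].
    destruct (C1 k phi1 Hf1 Hb1) as [phi0 [Hf0 [Hb0 H0]]].
    exists phi0; repeat split; auto.
  - intros k psi Hf Hb. destruct (D1 (h2' k) psi Hf Hb) as [phi1 [Hf1 [Hb1 H1]]].
    destruct (D2 k phi1 Hf1 Hb1) as [phi0 [Hf0 [Hb0 H0]]].
    exists phi0; repeat split; auto.
Qed.

Lemma G_comp {S : Type} (G : perm S -> Prop) : is_subgroup G ->
  forall g h, G g -> G h -> G (perm_comp g h).
Proof.
  intros [_ [HG2 [_ HG4]]] g h Hg Hh. destruct (HG2 g h Hg Hh) as [gh [Hgh E]].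
  apply (HG4 gh); auto.
Qed.

Lemma G_inv {S : Type} (G : perm S -> Prop) : is_subgroup G ->
  forall g, G g -> G (perm_inv g).
Proof.
  intros [_ [_ [HG3 HG4]]] g Hg. destruct (HG3 g Hg) as [gi [Hgi E]].
  apply (HG4 gi); auto.
Qed.

Lemma twisted_comp {S : Type} (P : perm S -> Prop) h1 h2 :
  (forall g h, P g -> P h -> P (perm_comp g h)) ->
  twisted_by P h1 -> twisted_by P h2 -> twisted_by P (fun k => h2 (h1 k)).
Proof.
  intros HP [Hh1 [l1 [Hd1 [Hc1 [HP1 Ha1]]]]] [Hh2 [l2 [Hd2 [Hc2 [HP2 Ha2]]]]].
  rewrite part_iff in Hd1, Hc1, Hd2, Hc2.
  rewrite Forall_forall in HP1, HP2, Ha1, Ha2.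
  set (l := flat_map (fun p => flat_map (fun q => comp_piece p q) l2) l1).
  assert (Hl : forall r, In r l -> exists p q x, In p l1 /\ In q l2 /\ in_brick (pdom p) x /\
                in_brick (pdom q) (tw p x) /\ r = mkcomp p q x).
  { intros r Hr. unfold l in Hr. apply in_flat_map in Hr. destruct Hr as [p [Hp Hr]].
    apply in_flat_map in Hr. destruct Hr as [q [Hq Hr]].
    unfold comp_piece in Hr. destruct (excluded_middle_informative _) as [H|H]; [|destruct Hr].
    destruct (constructive_indefinite_description _ H) as [x [Hx1 Hx2]]. simpl in Hr.
    destruct Hr as [<-|[]]. exists p, q, x; auto. }
  assert (Hag : agree l (fun k => h2 (h1 k))).
  { intros r Hr k Hk. destruct (Hl r Hr) as [p [q [x [Hp [Hq [Hx1 [Hx2 ->]]]]]]].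
    destruct (@mkcomp_spec S p q x Hx1 Hx2 k) as [[Hi _] Ht].
    destruct (Hi Hk) as [Hkp Hkq].
    rewrite (Ha1 p Hp k Hkp). fold (tw p k). rewrite (Ha2 q Hq _ Hkq). fold (tw q (tw p k)).
    apply Ht; auto. }
  assert (Hd : part (map (@pdom S) l)).
  { split.
    - rewrite Forall_forall. intros phi Hphi. apply in_map_iff in Hphi. destruct Hphi as [r [<- Hr]].
      destruct (Hl r Hr) as [p [q [x [Hp [Hq [Hx1 [Hx2 ->]]]]]]].
      apply mkcomp_fin; [apply (part_fin Hd1)|apply (part_fin Hc1)|apply (part_fin Hd2)|apply (part_fin Hc2)]; auto.
    - intros k. rewrite cnt_map. destruct Hd1 as [_ Hd1]. specialize (Hd1 k). rewrite cnt_map in Hd1.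
      rewrite <- Hd1. unfold l. apply cnt_flat. intros p Hp.
      rewrite cnt_flat with (Q := fun q => in_brick (pdom p) k /\ in_brick (pdom q) (h1 k)).
      { destruct (excluded_middle_informative (in_brick (pdom p) k)) as [Hk|Hk].
          - rewrite ind_T by auto. destruct Hd2 as [_ Hd2]. specialize (Hd2 (h1 k)). rewrite cnt_map in Hd2.
            rewrite <- Hd2. apply cnt_ext. intros q _. tauto.
          - rewrite ind_F by auto. apply cnt_zero. tauto. }
      intros q Hq. unfold comp_piece. destruct (excluded_middle_informative _) as [H|H].
      + destruct (constructive_indefinite_description _ H) as [x [Hx1 Hx2]]. simpl.
        destruct (@mkcomp_spec S p q x Hx1 Hx2 k) as [Hi _].
        rewrite Nat.add_0_r. apply ind_iff. rewrite Hi. split; intros [A1 A2]; split; auto.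
        * rewrite (Ha1 p Hp k A1); auto.
        * rewrite (Ha1 p Hp k A1) in A2; auto.
      + simpl. rewrite ind_F; auto. intros [A1 A2]. apply H. exists k. split; auto.
        rewrite (Ha1 p Hp k A1) in A2; auto. }
  destruct (homeo_comp Hh1 Hh2) as [h' [E1 [E2 _]]].
  split; [apply homeo_comp; auto|]. exists l. split; [|split; [|split]].
  - apply part_iff; auto.
  - apply part_iff. apply (@cod_part S l _ h' E1 E2 Hd); auto.
    rewrite Forall_forall. intros phi Hphi. apply in_map_iff in Hphi. destruct Hphi as [r [<- Hr]].
    destruct (Hl r Hr) as [p [q [x [Hp [Hq [Hx1 [Hx2 ->]]]]]]].
    apply mkcomp_fin; [apply (part_fin Hd1)|apply (part_fin Hc1)|apply (part_fin Hd2)|apply (part_fin Hc2)]; auto.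
  - rewrite Forall_forall. intros r Hr. destruct (Hl r Hr) as [p [q [x [Hp [Hq [Hx1 [Hx2 ->]]]]]]].
    simpl. apply HP; auto.
  - rewrite Forall_forall. exact Hag.
Qed.


Definition wordAt {S : Type} (s : S) (w : word) : S -> word :=
  fun t => if excluded_middle_informative (t = s) then w else [].

Lemma in_brick_at {S : Type} (s : S) w k : in_brick (wordAt s w) k <-> is_prefix w (k s).
Proof.
  unfold in_brick, wordAt; split.
  - intros H. specialize (H s). destruct (excluded_middle_informative (s = s)); tauto.
  - intros H t. destruct (excluded_middle_informative (t = s)); [subst; auto|].
    intros i Hi; simpl in Hi; lia.
Qed.

Lemma fin_at {S : Type} (s : S) w : fin_supp (wordAt s w).
Proof.
  exists [s]. intros t Ht. unfold wordAt. destruct (excluded_middle_informative (t = s)); auto.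
  subst; simpl in Ht; tauto.
Qed.

Lemma part_at {S : Type} (s : S) ws :
  (forall x, cntP (fun w => is_prefix w x) ws = 1) -> part (map (wordAt s) ws).
Proof.
  intros H; split.
  - rewrite Forall_forall; intros phi Hphi. apply in_map_iff in Hphi. destruct Hphi as [w [<- _]].
    apply fin_at.
  - intros k. rewrite cnt_map. rewrite <- (H (k s)). apply cnt_ext. intros; apply in_brick_at.
Qed.

Definition prefb (w : word) (x : Cantor) : bool :=
  forallb (fun i => Bool.eqb (nth i w false) (x i)) (seq 0 (length w)).

Lemma prefb_iff w x : is_prefix w x <-> prefb w x = true.
Proof.
  unfold is_prefix, prefb. rewrite forallb_forall. split.
  - intros H i Hi. apply in_seq in Hi. apply Bool.eqb_true_iff, H; lia.
  - intros H i Hi. apply Bool.eqb_true_iff, H, in_seq; lia.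
Qed.

Fixpoint cntb {A : Type} (f : A -> bool) (l : list A) : nat :=
  match l with [] => 0 | a :: l' => (if f a then 1 else 0) + cntb f l' end.

Lemma cnt_b {A : Type} (f : A -> bool) l : cntP (fun a => f a = true) l = cntb f l.
Proof.
  induction l; simpl; auto. rewrite IHl. f_equal.
  destruct (f a); [apply ind_T; auto|apply ind_F; discriminate].
Qed.

Lemma cnt_pref ws x : cntP (fun w => is_prefix w x) ws = cntb (fun w => prefb w x) ws.
Proof. rewrite <- cnt_b. apply cnt_ext. intros; apply prefb_iff. Qed.

Lemma is_prefix_cons b w x : is_prefix (b :: w) x <-> x 0 = b /\ is_prefix w (wdrop 1 x).
Proof.
  unfold is_prefix, wdrop; split.
  - intros H; split; [symmetry; apply (H 0); simpl; lia|].
    intros i Hi. rewrite Nat.add_1_r. apply (H (S i)); simpl; lia.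
  - intros [H0 H] [|i] Hi; simpl; [auto|]. rewrite <- Nat.add_1_r. apply H; simpl in Hi; lia.
Qed.

Lemma is_prefix_nil x : is_prefix [] x.
Proof. intros i Hi; simpl in Hi; lia. Qed.

Lemma G_id {S : Type} (G : perm S -> Prop) : is_subgroup G -> forall g, (forall x, pfun g x = x) -> G g.
Proof.
  intros [[e [He E]] [_ [_ HG4]]] g Hg. apply (HG4 e); auto. intros; rewrite E, Hg; auto.
Qed.

Lemma pinv_id {S : Type} (g : perm S) : (forall x, pfun g x = x) -> forall x, pinv g x = x.
Proof. intros H x. rewrite <- (H (pinv g x)), pinvK. auto. Qed.

Lemma twisted_inv {S : Type} (P : perm S -> Prop) f g :
  (forall g, P g -> P (perm_inv g)) ->
  twisted_by P f -> (forall k, g (f k) = k) -> (forall k, f (g k) = k) -> twisted_by P g.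
Proof.
  intros HP [[f' [A1 [A2 [C1 C2]]]] [l [Hd [Hc [HPl Ha]]]]] E1 E2.
  assert (Eg : g = f').
  { apply functional_extensionality; intros k. rewrite <- (A2 k) at 1. rewrite E1; auto. }
  subst g. split.
  - exists f; repeat split; auto.
  - exists (map inv_piece l). rewrite !map_map. simpl. rewrite Forall_forall in HPl, Ha.
    split; [|split; [|split]].
    + replace (map (fun x => pcod x) l) with (map (@pcod S) l) by reflexivity. auto.
    + replace (map (fun x => pdom x) l) with (map (@pdom S) l) by reflexivity. auto.
    + rewrite Forall_forall. intros q Hq. apply in_map_iff in Hq. destruct Hq as [p [<- Hp]].
      apply HP, HPl; auto.
    + rewrite Forall_forall. intros q Hq. apply in_map_iff in Hq. destruct Hq as [p [<- Hp]].
      intros k Hk. simpl in *.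
      set (x := twist (pcod p) (pdom p) (perm_inv (pgam p)) k).
      assert (f x = k) by (unfold x; rewrite (Ha p Hp) by apply twist_in; apply twist_inv; auto).
      rewrite <- H, E1. reflexivity.
Qed.

Lemma twisted_mono {S : Type} (P Q : perm S -> Prop) f :
  (forall g, P g -> Q g) -> twisted_by P f -> twisted_by Q f.
Proof.
  intros H [Hh [l [A [B [C D]]]]]. split; auto. exists l; split; auto; split; auto; split; auto.
  rewrite Forall_forall in *. auto.
Qed.

Lemma pref_two (a : bool) : forall x, cntP (fun w => is_prefix w x) [[a];[negb a]] = 1.
Proof. intros x. rewrite cnt_pref. unfold prefb; simpl. destruct a, (x 0); reflexivity. Qed.

Lemma iota_SVG {S : Type} (G : perm S -> Prop) (HG : is_subgroup G) (s : S) g :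
  G g -> SVG G (iota1 s g).
Proof.
  intros Hg.
  set (l := [Piece (wordAt s [false]) (wordAt s [false]) (perm_id S); Piece (wordAt s [true]) (wordAt s [true]) g]).
  assert (Hp : part (map (@pdom S) l)) by (apply (part_at s [[false];[true]]), (pref_two false)).
  assert (Hp' : part (map (@pcod S) l)) by (apply (part_at s [[false];[true]]), (pref_two false)).
  assert (Ha : agree l (iota1 s g)).
  { intros p Hp0 k Hk. simpl in Hp0. unfold iota1.
    destruct Hp0 as [<-|[<-|[]]]; simpl in *; apply in_brick_at in Hk; apply is_prefix_cons in Hk;
      destruct Hk as [Hk _]; rewrite Hk.
    - symmetry; apply twist_self; [|reflexivity]. apply in_brick_at, is_prefix_cons; split; auto.
      unfold is_prefix; simpl; intros; lia.
    - reflexivity. }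
  split; [apply (@pw_homeo S l); auto|].
  exists l. split; [apply part_iff; auto|split; [apply part_iff; auto|split]].
  - repeat constructor; simpl; auto. apply (G_id HG); auto.
  - rewrite Forall_forall; exact Ha.
Qed.

Lemma id_SVG {S : Type} (G : perm S -> Prop) (HG : is_subgroup G) : SVG G (fun k => k).
Proof.
  set (l := [Piece (fun _ : S => @nil bool) (fun _ => []) (perm_id S)]).
  assert (Hp : part (map (@pdom S) l)).
  { split. repeat constructor. exists []; auto.
    intros k; simpl. rewrite ind_T; auto. intros t i Hi; simpl in Hi; lia. }
  assert (Ha : agree l (fun k => k)).
  { intros p Hp0 k Hk. destruct Hp0 as [<-|[]]. symmetry; apply twist_self; auto. }
  split; [apply (@pw_homeo S l); auto|].
  exists l. split; [apply part_iff; auto|split; [apply part_iff; auto|split]].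
  - repeat constructor; simpl; auto. apply (G_id HG); auto.
  - rewrite Forall_forall; exact Ha.
Qed.

Lemma dir1 {S : Type} (G : perm S -> Prop) (HG : is_subgroup G) (s : S) h :
  generated (fun f => SV f \/ exists g, G g /\ f = iota1 s g) h -> SVG G h.
Proof.
  induction 1 as [f [Hf|[g [Hg ->]]]| |f g _ IH1 _ IH2|f g _ IH E1 E2].
  - apply twisted_mono with (2 := Hf). intros; apply (G_id HG); auto.
  - apply iota_SVG; auto.
  - apply id_SVG; auto.
  - apply twisted_comp; auto. intros; apply (G_comp HG); auto.
  - apply twisted_inv with f; auto. intros; apply (G_inv HG); auto.
Qed.


Definition L {S : Type} (a : S -> word) (g : perm S) (k : Config S) : Config S :=
  if excluded_middle_informative (in_brick a k) then twist a a g k else k.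

Lemma conj_gen {S : Type} (A : (Config S -> Config S) -> Prop) D D' (a b : S -> word) g :
  generated A D -> (forall k, D' (D k) = k) -> (forall k, D (D' k) = k) ->
  (forall k, in_brick a k -> D k = twist a b (perm_id S) k) ->
  generated A (L b g) -> generated A (L a g).
Proof.
  intros HD E1 E2 HDa HL.
  assert (Hback : forall k, in_brick b (D k) -> in_brick a k).
  { intros k Hk. set (k' := twist b a (perm_id S) (D k)).
    assert (Hk' : in_brick a k') by apply twist_in.
    assert (D k' = D k).
    { rewrite HDa by auto. unfold k'. rewrite (@twist_comp S b a b (perm_id S) (perm_id S) (perm_id S)) by reflexivity.
      apply twist_self; auto. }
    rewrite <- (E1 k), <- H, E1. auto. }
  assert (Heq : L a g = fun k => D' (L b g (D k))).
  { apply functional_extensionality; intros k. unfold L.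
    destruct (excluded_middle_informative (in_brick a k)) as [Ha|Ha].
    - rewrite (HDa k Ha).
      destruct (excluded_middle_informative (in_brick b (twist a b (perm_id S) k))) as [Hb|Hb];
        [|exfalso; apply Hb, twist_in].
      rewrite (@twist_comp S a b b (perm_id S) g g) by reflexivity.
      rewrite <- (E1 (twist a a g k)). f_equal.
      rewrite HDa by apply twist_in.
      apply (@twist_comp S a a b g (perm_id S) g). reflexivity.
    - destruct (excluded_middle_informative (in_brick b (D k))) as [Hb|Hb].
      + exfalso; apply Ha, Hback; auto.
      + rewrite E1; auto. }
  rewrite Heq. apply gen_comp; [apply gen_inv with D; auto|]. apply gen_comp; auto.
Qed.

Lemma SV_pw {S : Type} (l : list (piece S)) :
  part (map (@pdom S) l) -> part (map (@pcod S) l) ->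
  (forall p, In p l -> forall x, pfun (pgam p) x = x) -> SV (pw l) /\ agree l (pw l).
Proof.
  intros Hd Hc Hid.
  assert (Ha : agree l (pw l)).
  { intros p Hp k Hk. apply pw_agree; auto. apply (part_le1 Hd). }
  split; auto. split; [apply (@pw_homeo S l); auto|].
  exists l. split; [apply part_iff; auto|split; [apply part_iff; auto|split]].
  - rewrite Forall_forall; auto.
  - rewrite Forall_forall; auto.
Qed.

Lemma pref_app v u x : is_prefix (v ++ u) x -> is_prefix v x.
Proof.
  unfold is_prefix; intros H i Hi. rewrite <- H by (rewrite length_app; lia).
  rewrite app_nth1; auto.
Qed.

Lemma twist_ext_at {S : Type} (s : S) v v' u k :
  in_brick (wordAt s (v ++ u)) k ->
  twist (wordAt s v) (wordAt s v') (perm_id S) k = twist (wordAt s (v ++ u)) (wordAt s (v' ++ u)) (perm_id S) k.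
Proof.
  intros Hk. apply in_brick_at in Hk. apply cfg_ext; intros t i. rewrite !twist_app. simpl.
  unfold wordAt. destruct (excluded_middle_informative (t = s)) as [->|Hts]; [|reflexivity].
  rewrite !length_app.
  destruct (Nat.ltb_spec i (length v')) as [H1|H1];
    destruct (Nat.ltb_spec i (length v' + length u)) as [H2|H2]; try lia.
  - rewrite app_nth1; auto.
  - rewrite app_nth2 by lia.
    replace (nth (i - length v') u false) with (nth (i - length v' + length v) (v ++ u) false).
    + rewrite Hk by (rewrite length_app; lia). reflexivity.
    + rewrite app_nth2 by lia. f_equal; lia.
  - f_equal; lia.
Qed.

Lemma wordAt_nil {S : Type} (s : S) : wordAt s [] = fun _ => [].
Proof. apply functional_extensionality; intros t; unfold wordAt; destruct (excluded_middle_informative (t = s)); auto. Qed.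

Lemma in_at1 {S : Type} (s : S) b k : in_brick (wordAt s [b]) k <-> k s 0 = b.
Proof.
  rewrite in_brick_at, is_prefix_cons. split; [tauto|]. intros; split; auto; apply is_prefix_nil.
Qed.

Lemma twist_move {S : Type} (s : S) (g : perm S) b k : k s 0 = b ->
  twist (wordAt s [b]) (wordAt (pfun g s) [b]) g k = twist (wordAt s []) (wordAt s []) g k.
Proof.
  intros Hk. rewrite wordAt_nil. apply cfg_ext; intros t i. rewrite !twist_app. simpl.
  unfold wordAt. destruct (excluded_middle_informative (t = pfun g s)) as [->|Ht].
  - rewrite pfunK. destruct (excluded_middle_informative (s = s)); [|tauto]. simpl.
    destruct i; simpl; auto. f_equal; lia.
  - destruct (excluded_middle_informative (pinv g t = s)) as [E|E].
    + exfalso; apply Ht; rewrite <- E, pinvK; auto.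
    + simpl. f_equal; lia.
Qed.


Definition Agen {S : Type} (G : perm S -> Prop) (s : S) :=
  fun f : Config S -> Config S => SV f \/ exists g, G g /\ f = iota1 s g.

Lemma L_true {S : Type} (G : perm S -> Prop) (s : S) g : G g ->
  generated (Agen G s) (L (wordAt s [true]) g).
Proof.
  intros Hg. replace (L (wordAt s [true]) g) with (iota1 s g).
  - apply gen_base; right; eauto.
  - apply functional_extensionality; intros k. unfold L, iota1.
    destruct (excluded_middle_informative (in_brick (wordAt s [true]) k)) as [H|H];
      rewrite in_at1 in H.
    + rewrite H; reflexivity.
    + destruct (k s 0); [tauto|reflexivity].
Qed.

Lemma pid_fix {S : Type} (l : list (piece S)) :
  Forall (fun p => pgam p = perm_id S) l -> forall p, In p l -> forall x, pfun (pgam p) x = x.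
Proof. rewrite Forall_forall. intros H p Hp x. rewrite H; auto. Qed.

Lemma L_false {S : Type} (G : perm S -> Prop) (s : S) g : G g ->
  generated (Agen G s) (L (wordAt s [false]) g).
Proof.
  intros Hg.
  set (l := [Piece (wordAt s [false]) (wordAt s [true]) (perm_id S);
             Piece (wordAt s [true]) (wordAt s [false]) (perm_id S)]).
  destruct (@SV_pw S l) as [HSV Ha].
  - apply (part_at s [[false];[true]]), (pref_two false).
  - apply (part_at s [[true];[false]]), (pref_two true).
  - apply pid_fix. repeat constructor.
  - destruct (proj1 HSV) as [D' [E1 [E2 _]]].
    apply conj_gen with (pw l) D' (wordAt s [true]); auto.
    + apply gen_base; left; auto.
    + intros k Hk. apply (Ha (Piece (wordAt s [false]) (wordAt s [true]) (perm_id S))); simpl; auto.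
    + apply L_true; auto.
Qed.

Lemma L_nil {S : Type} (G : perm S -> Prop) (s : S) g : G g ->
  generated (Agen G s) (L (wordAt s []) g).
Proof.
  intros Hg.
  set (l := [Piece (wordAt s [true]) (wordAt (pfun g s) [true]) (perm_id S);
             Piece (wordAt s [false]) (wordAt (pfun g s) [false]) (perm_id S)]).
  destruct (@SV_pw S l) as [HSV Ha].
  - apply (part_at s [[true];[false]]), (pref_two true).
  - apply (part_at (pfun g s) [[true];[false]]), (pref_two true).
  - apply pid_fix. repeat constructor.
  - replace (L (wordAt s []) g) with (fun k => pw l (L (wordAt s [true]) g (L (wordAt s [false]) g k))).
    + apply gen_comp; [apply gen_base; left; auto|]. apply gen_comp; [apply L_true|apply L_false]; auto.
    + apply functional_extensionality; intros k.
      assert (HL: L (wordAt s []) g k = twist (wordAt s []) (wordAt s []) g k)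
        by (unfold L; destruct (excluded_middle_informative _) as [_|H];
            [reflexivity| exfalso; apply H, in_brick_at, is_prefix_nil]).
      rewrite HL. unfold L. destruct (k s 0) eqn:Hk.
      * destruct (excluded_middle_informative (in_brick (wordAt s [false]) k)) as [H|_];
          [rewrite in_at1 in H; congruence|].
        destruct (excluded_middle_informative (in_brick (wordAt s [true]) k)) as [_|H];
          [|rewrite in_at1 in H; congruence].
        rewrite (Ha (Piece (wordAt s [true]) (wordAt (pfun g s) [true]) (perm_id S))) by (simpl; auto; apply twist_in).
        simpl. rewrite (@twist_comp S _ _ _ g (perm_id S) g) by reflexivity.
        apply twist_move; auto.
      * destruct (excluded_middle_informative (in_brick (wordAt s [false]) k)) as [_|H];
          [|rewrite in_at1 in H; congruence].
        destruct (excluded_middle_informative (in_brick (wordAt s [true]) (twist (wordAt s [false]) (wordAt s [false]) g k))) as [H|_].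
        { exfalso. pose proof (twist_in (wordAt s [false]) (wordAt s [false]) g k) as H'.
          rewrite in_at1 in H, H'. congruence. }
        rewrite (Ha (Piece (wordAt s [false]) (wordAt (pfun g s) [false]) (perm_id S))) by (simpl; auto; apply twist_in).
        simpl. rewrite (@twist_comp S _ _ _ g (perm_id S) g) by reflexivity.
        apply twist_move; auto.
Qed.

Lemma pref_three (a b : bool) :
  (forall x, cntP (fun w => is_prefix w x) [[a;b];[a;negb b];[negb a]] = 1) /\
  (forall x, cntP (fun w => is_prefix w x) [[a];[negb a;false];[negb a;true]] = 1).
Proof.
  split; intros x; rewrite cnt_pref; unfold prefb; simpl; destruct a, b, (x 0), (x 1); reflexivity.
Qed.

Lemma L_short {S : Type} (G : perm S -> Prop) (s : S) g a b u :
  generated (Agen G s) (L (wordAt s (a :: u)) g) -> generated (Agen G s) (L (wordAt s (a :: b :: u)) g).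
Proof.
  intros IH.
  set (l := [Piece (wordAt s [a;b]) (wordAt s [a]) (perm_id S);
             Piece (wordAt s [a;negb b]) (wordAt s [negb a;false]) (perm_id S);
             Piece (wordAt s [negb a]) (wordAt s [negb a;true]) (perm_id S)]).
  destruct (pref_three a b) as [P1 P2].
  destruct (@SV_pw S l) as [HSV Ha].
  - apply (part_at s [[a;b];[a;negb b];[negb a]]), P1.
  - apply (part_at s [[a];[negb a;false];[negb a;true]]), P2.
  - apply pid_fix. repeat constructor.
  - destruct (proj1 HSV) as [D' [E1 [E2 _]]].
    apply conj_gen with (pw l) D' (wordAt s (a :: u)); auto.
    + apply gen_base; left; auto.
    + intros k Hk.
      rewrite (Ha (Piece (wordAt s [a;b]) (wordAt s [a]) (perm_id S))); simpl; auto.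
      * apply (@twist_ext_at S s [a;b] [a] u); auto.
      * apply in_brick_at. apply in_brick_at in Hk. apply (@pref_app [a;b] u); auto.
Qed.

Lemma L_gen {S : Type} (G : perm S -> Prop) (s : S) g : G g ->
  forall w, generated (Agen G s) (L (wordAt s w) g).
Proof.
  intros Hg.
  assert (forall n w, length w <= n -> generated (Agen G s) (L (wordAt s w) g)).
  { induction n as [|n IH]; intros w Hw.
    - destruct w; [apply L_nil; auto|simpl in Hw; lia].
    - destruct w as [|a [|b u]].
      + apply L_nil; auto.
      + destruct a; [apply L_true|apply L_false]; auto.
      + apply L_short. apply IH. simpl in *; lia. }
  intros w; apply (H (length w)); auto.
Qed.


Fixpoint chainL (n : nat) : list word :=
  match n with 0 => [[]] | S n => [true] :: map (cons false) (chainL n) end.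

Lemma chain_len n : length (chainL n) = S n.
Proof. induction n; simpl; auto. rewrite length_map; auto. Qed.

Lemma chain_cnt n : forall x, cntP (fun w => is_prefix w x) (chainL n) = 1.
Proof.
  induction n as [|n IH]; intros x; simpl.
  - rewrite ind_T; auto. apply is_prefix_nil.
  - rewrite cnt_map. destruct (x 0) eqn:Hx.
    + rewrite ind_T by (apply is_prefix_cons; split; auto; apply is_prefix_nil).
      rewrite cnt_zero; auto. intros w _ Hw. apply is_prefix_cons in Hw. destruct Hw; congruence.
    + rewrite ind_F by (rewrite is_prefix_cons; intros [H _]; congruence).
      rewrite <- (IH (wdrop 1 x)). apply cnt_ext. intros w _. rewrite is_prefix_cons. tauto.
Qed.

Lemma map_fst_combine {A B : Type} (l : list A) (m : list B) :
  length l = length m -> map fst (combine l m) = l.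
Proof.
  revert m; induction l; intros [|b m] H; simpl in *; try lia; auto. rewrite IHl; auto.
Qed.

Lemma map_snd_combine {A B : Type} (l : list A) (m : list B) :
  length l = length m -> map snd (combine l m) = m.
Proof.
  revert m; induction l; intros [|b m] H; simpl in *; try lia; auto. rewrite IHl; auto.
Qed.

Fixpoint foldL {S : Type} (l : list ((S -> word) * perm S)) : Config S -> Config S :=
  match l with
  | [] => fun k => k
  | ag :: l' => fun k => L (fst ag) (snd ag) (foldL l' k)
  end.

Lemma foldL_out {S : Type} (l : list ((S -> word) * perm S)) k :
  (forall ag, In ag l -> ~ in_brick (fst ag) k) -> foldL l k = k.
Proof.
  induction l as [|ag l IH]; simpl; intros H; auto.
  rewrite IH by auto. unfold L. destruct (excluded_middle_informative _) as [H'|]; auto.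
  exfalso; apply (H ag); auto.
Qed.

Lemma foldL_in {S : Type} (l : list ((S -> word) * perm S)) :
  (forall y, cntP (fun ag => in_brick (fst ag) y) l <= 1) ->
  forall ag k, In ag l -> in_brick (fst ag) k -> foldL l k = twist (fst ag) (fst ag) (snd ag) k.
Proof.
  induction l as [|a0 l IH]; simpl; intros Hc ag k Hin Hk; [destruct Hin|].
  assert (Hc' : forall y, cntP (fun ag => in_brick (fst ag) y) l <= 1).
  { intros y; specialize (Hc y); lia. }
  destruct Hin as [<-|Hin].
  - rewrite foldL_out.
    + unfold L. destruct (excluded_middle_informative _); tauto.
    + intros b Hb Hbk. specialize (Hc k). rewrite ind_T in Hc by auto.
      pose proof (cnt_In (fun ag => in_brick (fst ag) k) l b Hb Hbk). lia.
  - rewrite (IH Hc' ag k Hin Hk). unfold L.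
    destruct (excluded_middle_informative _) as [H|H]; auto. exfalso.
    set (y := twist (fst ag) (fst ag) (snd ag) k) in *.
    specialize (Hc y). rewrite ind_T in Hc by auto.
    pose proof (cnt_In (fun ag => in_brick (fst ag) y) l ag Hin (twist_in _ _ _ _)). lia.
Qed.

Lemma foldL_gen {S : Type} (A : (Config S -> Config S) -> Prop) (l : list ((S -> word) * perm S)) :
  (forall ag, In ag l -> generated A (L (fst ag) (snd ag))) -> generated A (foldL l).
Proof.
  induction l as [|ag l IH]; simpl; intros H.
  - apply gen_id.
  - apply gen_comp; auto.
Qed.

Lemma dir2 {S : Type} (G : perm S -> Prop) (HG : is_subgroup G) (s : S) h :
  SVG G h -> generated (Agen G s) h.
Proof.
  intros [Hh [l [Hd [Hc [HPl Ha]]]]].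
  rewrite part_iff in Hd, Hc. rewrite Forall_forall in HPl, Ha.
  destruct l as [|p0 l0] eqn:El.
  { destruct Hd as [_ Hd]. specialize (Hd (fun _ _ => false)). simpl in Hd; lia. }
  rewrite <- El in *. clear p0 l0 El.
  set (n := pred (length l)).
  set (ws := chainL n).
  assert (Hlen : length l = length ws).
  { unfold ws; rewrite chain_len. unfold n. destruct l; simpl; auto.
    destruct Hd as [_ Hd]. specialize (Hd (fun _ _ => false)). simpl in Hd; lia. }
  set (lc := combine l ws).
  assert (Hfst : map fst lc = l) by (apply map_fst_combine; auto).
  assert (Hsnd : map snd lc = ws) by (apply map_snd_combine; auto).
  assert (Hinl : forall pw, In pw lc -> In (fst pw) l).
  { intros pw Hpw. assert (In (fst pw) (map fst lc)) by (apply in_map; auto). rewrite Hfst in H; auto. }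
  assert (Hws : part (map (wordAt s) ws)) by (apply part_at, chain_cnt).
  set (lb := map (fun pw => Piece (pdom (fst pw)) (wordAt s (snd pw)) (perm_id S)) lc).
  set (lcc := map (fun pw => Piece (wordAt s (snd pw)) (pcod (fst pw)) (perm_id S)) lc).
  assert (E1 : map (@pdom S) lb = map (@pdom S) l).
  { unfold lb. rewrite map_map, <- Hfst, map_map. reflexivity. }
  assert (E2 : map (@pcod S) lb = map (wordAt s) ws).
  { unfold lb. rewrite map_map, <- Hsnd, map_map. reflexivity. }
  assert (E3 : map (@pdom S) lcc = map (wordAt s) ws).
  { unfold lcc. rewrite map_map, <- Hsnd, map_map. reflexivity. }
  assert (E4 : map (@pcod S) lcc = map (@pcod S) l).
  { unfold lcc. rewrite map_map, <- Hfst, map_map. reflexivity. }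
  destruct (@SV_pw S lb) as [SVb Hab].
  { rewrite E1; auto. } { rewrite E2; auto. }
  { intros q Hq. unfold lb in Hq. apply in_map_iff in Hq. destruct Hq as [pw [<- _]]. reflexivity. }
  destruct (@SV_pw S lcc) as [SVc Hac].
  { rewrite E3; auto. } { rewrite E4; auto. }
  { intros q Hq. unfold lcc in Hq. apply in_map_iff in Hq. destruct Hq as [pw [<- _]]. reflexivity. }
  set (lf := map (fun pw => (wordAt s (snd pw), pgam (fst pw))) lc).
  assert (Hdisj : forall y, cntP (fun ag => in_brick (fst ag) y) lf <= 1).
  { intros y. unfold lf. rewrite cnt_map. simpl.
    replace (cntP (fun pw => in_brick (wordAt s (snd pw)) y) lc)
      with (cntP (fun w => in_brick (wordAt s w) y) (map snd lc)) by (rewrite cnt_map; reflexivity).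
    rewrite Hsnd. destruct Hws as [_ Hws]. specialize (Hws y). rewrite cnt_map in Hws. lia. }
  assert (Heq : h = fun k => pw lcc (foldL lf (pw lb k))).
  { apply functional_extensionality; intros k.
    destruct (part_cov Hd k) as [p [Hp Hk]].
    assert (Hpw : exists w, In (p, w) lc).
    { assert (Hp2 : In p (map fst lc)) by (rewrite Hfst; auto).
      apply in_map_iff in Hp2. destruct Hp2 as [[p' w] [Hp' Hin]].
      simpl in Hp'; subst p'; eauto. }
    destruct Hpw as [w Hpw].
    rewrite (Hab (Piece (pdom p) (wordAt s w) (perm_id S))) by
      (auto; unfold lb; apply (in_map (fun pw => Piece (pdom (fst pw)) (wordAt s (snd pw)) (perm_id S)) lc (p, w)); auto).
    simpl.
    rewrite (@foldL_in S lf Hdisj (wordAt s w, pgam p)) by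
      (first [apply twist_in | unfold lf; apply (in_map (fun pw => (wordAt s (snd pw), pgam (fst pw))) lc (p, w)); auto]).
    simpl.
    rewrite (Hac (Piece (wordAt s w) (pcod p) (perm_id S))) by
      (first [apply twist_in | unfold lcc; apply (in_map (fun pw => Piece (wordAt s (snd pw)) (pcod (fst pw)) (perm_id S)) lc (p, w)); auto]).
    simpl.
    rewrite (@twist_comp S _ _ _ (pgam p) (perm_id S) (pgam p)) by reflexivity.
    rewrite (@twist_comp S _ _ _ (perm_id S) (pgam p) (pgam p)) by reflexivity.
    apply Ha; auto. }
  rewrite Heq. apply gen_comp; [apply gen_base; left; auto|].
  apply gen_comp; [|apply gen_base; left; auto].
  apply foldL_gen. intros ag Hag. unfold lf in Hag. apply in_map_iff in Hag.
  destruct Hag as [pw [<- Hpw]]. simpl. apply L_gen. apply HPl. apply Hinl; auto.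
Qed.

Theorem proposition3p1 (S : Type)
  (G : perm S -> Prop) (HG : is_subgroup G) (s : S) :
  forall h : Config S -> Config S,
    SVG G h <->
    generated (fun f => SV f \/ exists g, G g /\ f = iota1 s g) h.
Proof.
  intros h; split.
  - apply dir2; auto.
  - apply dir1; auto.
Qed.
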